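(* If a \textsc{2-Visits} instance has a feasible schedule, then it has a feasible schedule in which all secondary visits are placed in gaps (equivalently, no primary visit is placed in a gap).
   Context: \textsc{2-Visits} (primary/secondary formulation): given non-decreasing positive integers $d_1\le\dots\le d_n$, a feasible schedule is a schedule of length $2n$ (each position $1,\dots,2n$ holds one visit) containing one primary and one secondary visit of each node $i\in[n]$, such that the primary visit of $i$ is at position at most $d_i$, and the secondary visit of $i$ is either before its primary visit or at most $d_i$ positions after its primary visit. The discretized sequence $A=\langle a_1,\dots,a_n\rangle$ is defined by $a_n=d_n$ and $a_i=\min\{a_{i+1}-1,d_i\}$ for $i<n$; a position $p\in[2n]$ is a gap if $p\notin A$. Standing assumptions: all entries of $A$ are positive and all $d_i\le 2n$ (so there are exactly $n$ gaps in $[2n]$). *)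

(* Defs.v *)
From mathcomp Require Import all_boot.
Unset Printing Implicit Defensive.

(* An instance is a sequence d = [:: d_1; ...; d_n] (node i of the paper is
   index i-1 here); n = size d.  Positions are the naturals 1 .. 2n. *)

(* Discretized sequence A = [:: a_1; ...; a_n]:
   a_n = d_n and a_i = min (a_{i+1} - 1) d_i.  (nat subtraction; it agrees
   with integer subtraction whenever all a_i are positive, which is a
   standing assumption.) *)
Definition disc (d : seq nat) : seq nat :=
  foldr (fun di acc => match acc with
                       | [::] => [:: di]
                       | a :: _ => minn (a - 1) di :: acc
                       end) [::] d.

Definition gap (d : seq nat) (p : nat) : bool := p \notin disc d.

(* A schedule is given by the positions of the primary visit (prim i) and of
   the secondary visit (sec i) of each node i; all 2n visits occupy pairwise
   distinct positions in 1..2n, i.e. each of the 2n positions holds exactly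
   one visit. *)
Definition feasible (d : seq nat) (prim sec : 'I_(size d) -> nat) : Prop :=
  (forall i, 1 <= prim i <= 2 * size d) /\
  (forall i, 1 <= sec i <= 2 * size d) /\
  (forall i j, prim i <> sec j) /\
  (forall i j, prim i = prim j -> i = j) /\
  (forall i j, sec i = sec j -> i = j) /\
  (forall i, prim i <= nth 0 d i) /\
  (forall i, sec i < prim i \/ sec i <= prim i + nth 0 d i).
Arguments feasible d prim sec : clear implicits.

(* Main.v *)
Require Import Defs.
From mathcomp Require Import all_boot zify.


Lemma disc_cons x l : disc (x :: l) =
  match disc l with [::] => [:: x] | a :: _ => minn (a - 1) x :: disc l end.
Proof. by []. Qed.

Lemma size_disc d : size (disc d) = size d.
Proof.
elim: d => [|x l IH] //; rewrite disc_cons.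
by case E: (disc l) IH => [|a t] /= <-.
Qed.

Lemma disc_le_d d i h : i <= h < size d -> nth 0 (disc d) i <= nth 0 d h.
Proof.
elim: d i h => [|x l IH] i h; first by rewrite /= nth_nil.
rewrite disc_cons.
case E: (disc l) => [|a t].
  have : size l = 0 by rewrite -size_disc E.
  case: l {IH E} => // _; case: i => [|i]; case: h => [|h] /=; rewrite ?nth_nil; lia.
case: i => [|i]; case: h => [|h] //=.
- by move=> _; rewrite geq_minr.
- move=> Hh. have := IH 0 h; rewrite E /= => H.
  have := H Hh; lia.
- move=> Hh; have := IH i h; rewrite E /=; apply; done.
Qed.


Lemma disc_witness d i : all (fun a => 0 < a) (disc d) -> i < size d ->
  exists l, i <= l < size d /\ nth 0 (disc d) i + (l - i) = nth 0 d l.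
Proof.
elim: d i => [|x l IH] i; first by [].
rewrite disc_cons.
case E: (disc l) => [|a t].
  have Hl0 : size l = 0 by rewrite -size_disc E.
  move=> _ Hi; exists 0; move: Hi; case: l Hl0 {IH E} => // _.
  case: i => // _; split => //=; lia.
move=> /= /andP [Hm Hall].
have Hl : all (fun a => 0 < a) (disc l) by rewrite E.
case: i => [|i] Hi /=.
- case: (leqP x (a - 1)) => Hx.
    exists 0; split => //; rewrite /=; lia.
  have Ha : 0 < a by move: Hl; rewrite E /= => /andP[].
  have Hs : 0 < size l by rewrite -size_disc E.
  have [l' [H1 H2]] := IH 0 Hl Hs.
  exists l'.+1; split; first by lia.
  move: H2; rewrite E /= => H2; lia.
- have [l' [H1 H2]] := IH i Hl Hi.
  exists l'.+1; split; first by lia.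
  rewrite /= subSS; move: H2; rewrite E; exact.
Qed.

Lemma cnt_ord_lt n m : count (fun h : 'I_n => h < m) (enum 'I_n) = minn m n.
Proof.
have := count_map val (fun x => x < m) (enum 'I_n).
rewrite val_enum_ord => <-.
elim: n => [|n IH] //.
rewrite -addn1 iotaD count_cat IH /= add0n.
case: (ltnP n m) => H; lia.
Qed.

Lemma count_prim_le d (p : 'I_(size d) -> nat) i :
  sorted leq d -> all (fun a => 0 < a) (disc d) ->
  (forall a b, p a = p b -> a = b) ->
  (forall h, p h <= nth 0 d h) -> i < size d ->
  i < count (fun h => p h <= nth 0 (disc d) i) (enum 'I_(size d)).
Proof.
move=> Hs HA Hinj Hpd Hi.
have [l [/andP [Hil Hln] Hl]] := @disc_witness d i HA Hi.
set a := nth 0 (disc d) i in Hl *.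
have H1 : count (fun h : 'I_(size d) => h < l.+1) (enum 'I_(size d)) = l.+1.
  rewrite cnt_ord_lt; lia.
have H2 : count (fun h : 'I_(size d) => (h < l.+1) && (a < p h)) (enum 'I_(size d)) <= l - i.
  rewrite -size_filter -(size_map p).
  rewrite -[X in _ <= X](size_iota a.+1).
  apply: uniq_leq_size.
    rewrite map_inj_uniq; first by apply: filter_uniq; apply: enum_uniq.
    by move=> x y; apply: Hinj.
  move=> y /mapP [h]; rewrite mem_filter => /andP [/andP [Hh Hap] _] ->.
  rewrite mem_iota.
  have Hdl : nth 0 d h <= nth 0 d l.
    apply: (sorted_leq_nth leq_trans leqnn 0 Hs); rewrite ?inE //; lia.
  have := Hpd h; lia.
have H3 := @sub_count _ (fun h : 'I_(size d) => h < l.+1)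
  (predU (fun h => p h <= a) (fun h : 'I_(size d) => (h < l.+1) && (a < p h))).
have H4 := count_predUI (fun h => p h <= a) (fun h : 'I_(size d) => (h < l.+1) && (a < p h)) (enum 'I_(size d)).
have H5 : count (fun h : 'I_(size d) => h < l.+1) (enum 'I_(size d)) <=
   count (predU (fun h => p h <= a) (fun h : 'I_(size d) => (h < l.+1) && (a < p h))) (enum 'I_(size d)).
  apply: H3 => h /= Hh; case: (leqP (p h) a) => //= _; by rewrite Hh.
lia.
Qed.

Lemma exists_h d (p : 'I_(size d) -> nat) i :
  sorted leq d -> all (fun a => 0 < a) (disc d) ->
  (forall a b, p a = p b -> a = b) ->
  (forall h, p h <= nth 0 d h) -> i < size d ->
  (forall h, p h <> nth 0 (disc d) i) ->
  exists h, p h < nth 0 (disc d) i <= nth 0 d h.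
Proof.
move=> Hs HA Hinj Hpd Hi Hne.
set x := nth 0 (disc d) i.
case: (boolP [exists h, (p h < x) && (x <= nth 0 d h)]) => [/existsP [h Hh]|/existsPn H].
  by exists h.
have C1 := @count_prim_le d p i Hs HA Hinj Hpd Hi.
have C2 : count (fun h => p h <= x) (enum 'I_(size d)) <=
          count (fun h : 'I_(size d) => h < i) (enum 'I_(size d)).
  apply: sub_count => h /= Hh.
  have Hlt : p h < x by have := Hne h; rewrite -/x; lia.
  have := H h; rewrite Hlt /= -ltnNge => Hd.
  case: (ltnP h i) => // Hih.
  have := @disc_le_d d i h; rewrite Hih ltn_ord /= => Hle.
  have := Hle isT; rewrite -/x; lia.
rewrite cnt_ord_lt in C2; move: C1; rewrite -/x; lia.
Qed.

Definition M d (p : 'I_(size d) -> nat) := \sum_(h < size d) (nth 0 d h - p h).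
Arguments M {d} p.

Lemma main_ind d N : sorted leq d -> all (fun a => 0 < a) (disc d) ->
  forall p s : 'I_(size d) -> nat, feasible d p s -> M p < N ->
  exists prim sec : 'I_(size d) -> nat,
    feasible d prim sec /\ (forall i, gap d (sec i)).
Proof.
move=> Hsort HA.
elim: N => [|N IH] p s F HM; first by [].
case: (boolP [exists j, s j \in disc d]) => [/existsP [j Hj] | /existsPn H]; last first.
  by exists p, s; split => // i; rewrite /gap; apply: H.
have F' := F.
case: F' => [Hp [Hs [Hps [Hpi [Hsi [Hpd Hsd]]]]]].
have Hsd' : forall k, s k <= p k + nth 0 d k.
  by move=> k; case: (Hsd k) => Hk; lia.
set x := s j.
have Hi : index x (disc d) < size d by rewrite -size_disc index_mem.
have Hx : nth 0 (disc d) (index x (disc d)) = x by apply: nth_index.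
have [h Hh] : exists h, p h < x <= nth 0 d h.
  rewrite -Hx; apply: exists_h => //.
  by move=> h'; rewrite Hx; apply: Hps.
pose p' := fun k => if k == h then x else p k.
pose s' := fun k => if k == j then p h else s k.
apply: (IH p' s').
  split; [|split; [|split; [|split; [|split; [|split]]]]].
  - by move=> k; rewrite /p'; case: eqP => _; [apply: Hs | apply: Hp].
  - by move=> k; rewrite /s'; case: eqP => _; [apply: Hp | apply: Hs].
  - move=> a b; rewrite /p' /s'.
    case: (a =P h) => Ha; case: (b =P j) => Hb.
    + lia.
    + by move=> E; apply: Hb; apply: Hsi.
    + by move=> E; apply: Ha; apply: Hpi.
    + exact: Hps.
  - move=> a b; rewrite /p'.
    case: (a =P h) => Ha; case: (b =P h) => Hb.
    + by rewrite Ha Hb.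
    + by move=> E; exfalso; apply: (Hps b j); rewrite -E.
    + by move=> E; exfalso; apply: (Hps a j); rewrite E.
    + exact: Hpi.
  - move=> a b; rewrite /s'.
    case: (a =P j) => Ha; case: (b =P j) => Hb.
    + by rewrite Ha Hb.
    + by move=> E; exfalso; apply: (Hps h b).
    + by move=> E; exfalso; apply: (Hps h a).
    + exact: Hsi.
  - move=> k; rewrite /p'; case: (k =P h) => [->|_]; first lia.
    exact: Hpd.
  - move=> k; right; rewrite /p' /s'.
    case: (k =P h) => Hk; case: (k =P j) => Hkj.
    + lia.
    + have := Hsd' k; rewrite Hk; lia.
    + have := Hsd' k; rewrite Hkj -/x; lia.
    + exact: Hsd'.
have HMlt : M p' < M p.
  rewrite /M (bigD1 h) //= [X in _ < X](bigD1 h) //=.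
  have -> : \sum_(k < size d | k != h) (nth 0 d k - p' k) =
            \sum_(k < size d | k != h) (nth 0 d k - p k).
    by apply: eq_bigr => k Hk; rewrite /p' (negbTE Hk).
  rewrite /p' eqxx ltn_add2r; move: Hh; rewrite -/x; lia.
lia.
Qed.

Theorem lemma5 (d : seq nat)
  (Hsorted : sorted leq d)
  (Hpos : all (fun x => 0 < x) d)
  (HApos : all (fun a => 0 < a) (disc d))
  (Hle : all (fun x => x <= 2 * size d) d) :
  (exists prim sec : 'I_(size d) -> nat, feasible d prim sec) ->
  exists prim sec : 'I_(size d) -> nat,
    feasible d prim sec /\ (forall i, gap d (sec i)).
Proof.
move=> [p [s F]].
exact: (@main_ind d (M p).+1 Hsorted HApos p s F).
Qed.
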